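(* Let $Id_{Gr}\colon Gr\to Gr$ be the identity functor of the category of groups. There is a natural isomorphism of bifunctors $Gr\times Gr\to Ab$ $$\Gamma_{11}\colon G^{ab}\otimes H^{ab}\xrightarrow{\simeq}T_{11}cr_2(Id_{Gr})(G,H)$$ such that $\Gamma_{11}(\bar g\otimes\bar h)=t_{11}([i_1g,i_2h])$ for $g\in G$, $h\in H$.
   Context: Notation. - $G\vee H=G*H$ is the free product, with injections $i_1,i_2$ and retractions $r_1,r_2$. - $[a,b]=aba^{-1}b^{-1}$, and $G^{ab}=G/[G,G]$ with $\bar g$ the class of $g$. Cross-effects and bilinearization. - For a reduced functor $F\colon Gr\to Gr$, $cr_2F(G,H)=\ker(F(G*H)\to F(G)\times F(H))$ (induced by $r_1,r_2$), a normal subgroup of $F(G*H)$. - For a bireduced bifunctor $B$ to groups, $T_{11}B(G,H)$ is the quotient of $B(G,H)$ by the (normal) subgroup $N_1N_2$, where $N_1$ is the image of $cr_2(B(-,H))(G,G)\subseteq B(G*G,H)$ under $B(\nabla,1)$ and $N_2$ is the image of $cr_2(B(G,-))(H,H)$ under $B(1,\nabla)$; here $\nabla$ is the folding map. $t_{11}$ is the projection. *)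

(* Defs.v *)
(* arbitrary (possibly infinite) groups, free products,
   abelianizations and tensor products are built by hand as setoid groups
   (carrier + equivalence + operations) presented by generators/relations. *)
From Stdlib Require Import List.
Import ListNotations.
Set Implicit Arguments.
Unset Strict Implicit.

Record group := Group {
  gcar :> Type;
  gmul : gcar -> gcar -> gcar;
  gone : gcar;
  ginv : gcar -> gcar;
  gmulA : forall x y z, gmul x (gmul y z) = gmul (gmul x y) z;
  gmul1 : forall x, gmul gone x = x;
  gmulV : forall x, gmul (ginv x) x = gone }.
Arguments gmul : clear implicits.
Arguments gone : clear implicits.
Arguments ginv : clear implicits.

Record hom (G H : group) := Hom {
  hfun :> G -> H;
  hmulP : forall x y, hfun (gmul G x y) = gmul H (hfun x) (hfun y) }.

(** Setoid presentations of groups: elements are representatives, [sgeq] is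
    the equality of the group. *)
Record sgrp := SGrp {
  scar :> Type;
  sgeq : scar -> scar -> Prop;
  smul : scar -> scar -> scar;
  sone : scar;
  sinv : scar -> scar }.
Arguments sgeq {s} _ _.
Arguments smul {s} _ _.
Arguments sone {s}.
Arguments sinv {s} _.

Definition scomm (K : sgrp) (a b : K) : K :=
  smul (smul (smul a b) (sinv a)) (sinv b).

Definition to_s (G : group) : sgrp := @SGrp (gcar G) eq (gmul G) (gone G) (ginv G).

(** Free product G * H : words in G + H modulo the usual relations *)
Inductive fp_rel (A B : sgrp) : list (A + B) -> list (A + B) -> Prop :=
| fp_refl w : @fp_rel A B w w
| fp_sym w1 w2 : @fp_rel A B w1 w2 -> @fp_rel A B w2 w1
| fp_trans w1 w2 w3 : @fp_rel A B w1 w2 -> @fp_rel A B w2 w3 -> @fp_rel A B w1 w3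
| fp_cong u v w1 w2 : @fp_rel A B w1 w2 -> @fp_rel A B (u ++ w1 ++ v) (u ++ w2 ++ v)
| fp_eql (a a' : A) : sgeq a a' -> @fp_rel A B [inl a] [inl a']
| fp_eqr (b b' : B) : sgeq b b' -> @fp_rel A B [inr b] [inr b']
| fp_onel : @fp_rel A B [inl sone] []
| fp_oner : @fp_rel A B [inr sone] []
| fp_mull (a a' : A) : @fp_rel A B [inl a; inl a'] [inl (smul a a')]
| fp_mulr (b b' : B) : @fp_rel A B [inr b; inr b'] [inr (smul b b')].

Definition linv (A B : sgrp) (l : A + B) : A + B :=
  match l with inl a => inl (sinv a) | inr b => inr (sinv b) end.

Definition FP (A B : sgrp) : sgrp :=
  @SGrp (list (A + B)) (@fp_rel A B) (@app _) nil
       (fun w => rev (map (@linv A B) w)).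

Definition i1 (A B : sgrp) (a : A) : FP A B := [inl a].
Definition i2 (A B : sgrp) (b : B) : FP A B := [inr b].

Definition eval2 (A B K : sgrp) (f : A -> K) (g : B -> K) (w : FP A B) : K :=
  fold_right (fun l acc => smul (match l with inl a => f a | inr b => g b end) acc)
             sone w.

Definition r1 (A B : sgrp) (w : FP A B) : A := eval2 (fun a => a) (fun _ => sone) w.
Definition r2 (A B : sgrp) (w : FP A B) : B := eval2 (fun _ => sone) (fun b => b) w.
Definition nabla (A : sgrp) (w : FP A A) : A := eval2 (fun a => a) (fun a => a) w.

Definition fpmap (A B A' B' : sgrp) (f : A -> A') (g : B -> B') (w : FP A B)
  : FP A' B' :=
  map (fun l => match l with inl a => inl (f a) | inr b => inr (g b) end) w.

(** cr_2(Id)(A,B) = ker (A * B -> A x B), as a predicate on A * B *)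
Definition Bker (A B : sgrp) (x : FP A B) : Prop :=
  sgeq (r1 x) sone /\ sgeq (r2 x) sone.

(** N1 : image under B(nabla,1) of cr_2(B(-,H))(G,G) in B(G*G,H) *)
Definition N1 (G H : group) (x : FP (to_s G) (to_s H)) : Prop :=
  exists z : FP (FP (to_s G) (to_s G)) (to_s H),
    Bker z /\
    sgeq (fpmap (@r1 _ _) (fun h => h) z : FP (to_s G) (to_s H)) sone /\
    sgeq (fpmap (@r2 _ _) (fun h => h) z : FP (to_s G) (to_s H)) sone /\
    sgeq x (fpmap (@nabla _) (fun h => h) z).

(** N2 : image under B(1,nabla) of cr_2(B(G,-))(H,H) in B(G,H*H) *)
Definition N2 (G H : group) (x : FP (to_s G) (to_s H)) : Prop :=
  exists z : FP (to_s G) (FP (to_s H) (to_s H)),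
    Bker z /\
    sgeq (fpmap (fun g => g) (@r1 _ _) z : FP (to_s G) (to_s H)) sone /\
    sgeq (fpmap (fun g => g) (@r2 _ _) z : FP (to_s G) (to_s H)) sone /\
    sgeq x (fpmap (fun g => g) (@nabla _) z).

Inductive sgen (K : sgrp) (S : K -> Prop) : K -> Prop :=
| sgen_in x : S x -> @sgen K S x
| sgen_one : @sgen K S sone
| sgen_mul x y : @sgen K S x -> @sgen K S y -> @sgen K S (smul x y)
| sgen_inv x : @sgen K S x -> @sgen K S (sinv x)
| sgen_eq x y : @sgen K S x -> sgeq x y -> @sgen K S y.

(** equality in T_11 cr_2(Id)(G,H) = B(G,H) / N1 N2 *)
Definition T11rel (G H : group) (x y : FP (to_s G) (to_s H)) : Prop :=
  sgen (fun z => N1 z \/ N2 z) (smul x (sinv y)).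

Arguments T11rel : clear implicits.

Definition gcomm (G : group) (a b : G) : G :=
  gmul G (gmul G (gmul G a b) (ginv G a)) (ginv G b).

Inductive comm_sub (G : group) : G -> Prop :=
| cs_comm a b : @comm_sub G (gcomm a b)
| cs_one : @comm_sub G (gone G)
| cs_mul x y : @comm_sub G x -> @comm_sub G y -> @comm_sub G (gmul G x y)
| cs_inv x : @comm_sub G x -> @comm_sub G (ginv G x).

Definition ab (G : group) : sgrp :=
  @SGrp (gcar G) (fun x y => @comm_sub G (gmul G x (ginv G y))) (gmul G) (gone G) (ginv G).

(** Tensor product of abelian groups: free abelian group on A x B (signed
    lists) modulo bilinearity *)
Inductive tens_rel (A B : sgrp) : list (bool * A * B) -> list (bool * A * B) -> Prop :=
| t_refl w : @tens_rel A B w w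
| t_sym w1 w2 : @tens_rel A B w1 w2 -> @tens_rel A B w2 w1
| t_trans w1 w2 w3 : @tens_rel A B w1 w2 -> @tens_rel A B w2 w3 -> @tens_rel A B w1 w3
| t_cong u v w1 w2 : @tens_rel A B w1 w2 -> @tens_rel A B (u ++ w1 ++ v) (u ++ w2 ++ v)
| t_comm w1 w2 : @tens_rel A B (w1 ++ w2) (w2 ++ w1)
| t_cancel s (a : A) (b : B) : @tens_rel A B [(s, a, b); (negb s, a, b)] []
| t_eq s (a a' : A) (b b' : B) :
    sgeq a a' -> sgeq b b' -> @tens_rel A B [(s, a, b)] [(s, a', b')]
| t_addl s (a a' : A) (b : B) :
    @tens_rel A B [(s, smul a a', b)] [(s, a, b); (s, a', b)]
| t_addr s (a : A) (b b' : B) :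
    @tens_rel A B [(s, a, smul b b')] [(s, a, b); (s, a, b')].

Definition Tens (A B : sgrp) : sgrp :=
  @SGrp (list (bool * A * B)) (@tens_rel A B) (@app _) nil
       (map (fun t => match t with (s, a, b) => (negb s, a, b) end)).

Definition stens (A B : sgrp) (a : A) (b : B) : Tens A B := [(true, a, b)].

Definition tmap (G H G' H' : group) (f : hom G G') (k : hom H H')
  (t : Tens (ab G) (ab H)) : Tens (ab G') (ab H') :=
  map (fun x => match x with (s, a, b) => (s, f a, k b) end) t.

(* Main.v *)
Require Import Defs.
From Stdlib Require Import List.
From Stdlib Require Import Setoid Morphisms Bool Arith.
Import ListNotations.

Set Implicit Arguments.

Class isSG (K : sgrp) : Prop := {
  sg_refl : forall x : K, sgeq x x;
  sg_sym : forall x y : K, sgeq x y -> sgeq y x;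
  sg_trans : forall x y z : K, sgeq x y -> sgeq y z -> sgeq x z;
  sg_mulc : forall x x' y y' : K, sgeq x x' -> sgeq y y' -> sgeq (smul x y) (smul x' y');
  sg_invc : forall x x' : K, sgeq x x' -> sgeq (sinv x) (sinv x');
  sg_assoc : forall x y z : K, sgeq (smul x (smul y z)) (smul (smul x y) z);
  sg_one_l : forall x : K, sgeq (smul sone x) x;
  sg_inv_l : forall x : K, sgeq (smul (sinv x) x) sone }.

#[global] Instance sg_Equiv K `{isSG K} : Equivalence (@sgeq K).
Proof. split; red; [apply sg_refl | apply sg_sym | apply sg_trans]. Qed.
#[global] Instance sg_mul_Proper K `{isSG K} : Proper (sgeq ==> sgeq ==> sgeq) (@smul K).
Proof. repeat red; intros; apply sg_mulc; auto. Qed.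
#[global] Instance sg_inv_Proper K `{isSG K} : Proper (sgeq ==> sgeq) (@sinv K).
Proof. repeat red; intros; apply sg_invc; auto. Qed.

Section SGLemmas.
Context {K : sgrp} `{isSG K}.
Lemma sg_inv_r (x : K) : sgeq (smul x (sinv x)) sone.
Proof.
  transitivity (smul (smul (sinv (sinv x)) (sinv x)) (smul x (sinv x))).
  { rewrite sg_inv_l. symmetry. apply sg_one_l. }
  rewrite <- sg_assoc. rewrite (sg_assoc (sinv x) x). rewrite sg_inv_l, sg_one_l.
  apply sg_inv_l.
Qed.
Lemma sg_one_r (x : K) : sgeq (smul x sone) x.
Proof.
  rewrite <- (sg_inv_l x). rewrite sg_assoc. rewrite sg_inv_r. apply sg_one_l.
Qed.
Lemma sg_inv_inv (x : K) : sgeq (sinv (sinv x)) x.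
Proof.
  rewrite <- (sg_one_r (sinv (sinv x))). rewrite <- (sg_inv_l x).
  rewrite sg_assoc. rewrite sg_inv_l. apply sg_one_l.
Qed.
Lemma sg_inv_mul (x y : K) : sgeq (sinv (smul x y)) (smul (sinv y) (sinv x)).
Proof.
  transitivity (smul (sinv (smul x y)) (smul (smul x y) (smul (sinv y) (sinv x)))).
  - rewrite <- (sg_assoc x y). rewrite (sg_assoc y). rewrite sg_inv_r, sg_one_l, sg_inv_r.
    symmetry; apply sg_one_r.
  - rewrite sg_assoc, sg_inv_l. apply sg_one_l.
Qed.
Lemma sg_inv_one : sgeq (@sinv K sone) sone.
Proof. rewrite <- (sg_one_r (sinv sone)). apply sg_inv_l. Qed.
End SGLemmas.

(** reflective free group solver *)
Inductive gexp := GA (n : nat) | G1 | GM (a b : gexp) | GI (a : gexp).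

Fixpoint geval (K : sgrp) (r : nat -> K) (e : gexp) : K :=
  match e with
  | GA n => r n | G1 => sone | GM a b => smul (geval K r a) (geval K r b)
  | GI a => sinv (geval K r a) end.

Arguments geval {K} r e.
Definition flip (x : bool * nat) := (negb (fst x), snd x).
Fixpoint fl (e : gexp) : list (bool * nat) :=
  match e with
  | GA n => [(true, n)] | G1 => [] | GM a b => fl a ++ fl b
  | GI a => rev (map flip (fl a)) end.
Definition lval (K : sgrp) (r : nat -> K) (x : bool * nat) : K :=
  if fst x then r (snd x) else sinv (r (snd x)).
Fixpoint evall (K : sgrp) (r : nat -> K) (l : list (bool * nat)) : K :=
  match l with [] => sone | x :: l' => smul (@lval K r x) (evall K r l') end.
Arguments lval {K} r x.
Arguments evall {K} r l.
Definition cancels (x y : bool * nat) := Nat.eqb (snd x) (snd y) && xorb (fst x) (fst y).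
Definition rstep (x : bool * nat) (acc : list (bool * nat)) :=
  match acc with
  | y :: acc' => if cancels x y then acc' else x :: acc
  | [] => [x] end.
Definition red (l : list (bool * nat)) := fold_right rstep [] l.

Section Solver.
Context {K : sgrp} `{isSG K} (r : nat -> K).
Lemma evall_app l1 l2 : sgeq (evall r (l1 ++ l2)) (smul (evall r l1) (evall r l2)).
Proof.
  induction l1; simpl. - symmetry; apply sg_one_l.
  - rewrite IHl1. apply sg_assoc.
Qed.
Lemma evall_inv l : sgeq (evall r (rev (map flip l))) (sinv (evall r l)).
Proof.
  induction l; simpl. - symmetry; apply sg_inv_one.
  - rewrite evall_app, IHl. simpl. rewrite sg_one_r, sg_inv_mul.
    destruct a as [[|] n]; unfold lval; simpl. reflexivity. rewrite sg_inv_inv; reflexivity.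
Qed.
Lemma geval_fl e : sgeq (geval r e) (evall r (fl e)).
Proof.
  induction e; simpl.
  - symmetry; apply sg_one_r.
  - reflexivity.
  - rewrite evall_app, IHe1, IHe2; reflexivity.
  - rewrite evall_inv, IHe; reflexivity.
Qed.
Lemma rstep_ok x acc : sgeq (evall r (rstep x acc)) (evall r (x :: acc)).
Proof.
  destruct acc as [|y acc]; simpl. reflexivity.
  destruct (cancels x y) eqn:E; [|reflexivity].
  unfold cancels in E. apply andb_true_iff in E as [E1 E2].
  apply Nat.eqb_eq in E1. destruct x as [[|] n], y as [[|] m]; simpl in *; try discriminate;
  subst; unfold lval; simpl; rewrite sg_assoc.
  - rewrite sg_inv_r, sg_one_l; reflexivity.
  - rewrite sg_inv_l, sg_one_l; reflexivity.
Qed.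
Lemma red_ok l : sgeq (evall r (red l)) (evall r l).
Proof.
  induction l; simpl. reflexivity.
  rewrite rstep_ok. simpl. rewrite IHl. reflexivity.
Qed.
Lemma geval_sound e1 e2 : red (fl e1) = red (fl e2) -> sgeq (geval r e1) (geval r e2).
Proof.
  intro E. rewrite !geval_fl, <- (red_ok (fl e1)), <- (red_ok (fl e2)), E. reflexivity.
Qed.
End Solver.

Ltac lookup x l :=
  lazymatch l with
  | x :: _ => constr:(0)
  | _ :: ?l' => let n := lookup x l' in constr:(S n)
  end.

Ltac reify env t :=
  lazymatch t with
  | smul ?a ?b =>
      lazymatch reify env a with pair ?e1 ?env1 =>
      lazymatch reify env1 b with pair ?e2 ?env2 => constr:(pair (GM e1 e2) env2) end end
  | sinv ?a => lazymatch reify env a with pair ?e1 ?env1 => constr:(pair (GI e1) env1) end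
  | sone => constr:(pair G1 env)
  | @nil _ => constr:(pair G1 env)
  | app ?a ?b =>
      lazymatch reify env a with pair ?e1 ?env1 =>
      lazymatch reify env1 b with pair ?e2 ?env2 => constr:(pair (GM e1 e2) env2) end end
  | _ => match constr:(tt) with
         | _ => let n := lookup t env in constr:(pair (GA n) env)
         | _ => let n := eval compute in (length env) in
                let env' := eval cbn beta iota delta [app] in (env ++ [t]) in
                constr:(pair (GA n) env')
         end
  end.

Ltac gsolve :=
  unfold scomm;
  lazymatch goal with
  | |- @sgeq ?K ?X ?Y =>
      lazymatch reify (@nil K) X with pair ?e1 ?env1 =>
      lazymatch reify env1 Y with pair ?e2 ?env2 =>
        change (@sgeq K (@geval K (fun n => nth n env2 (@sone K)) e1) (@geval K (fun n => nth n env2 (@sone K)) e2));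
        apply geval_sound; vm_compute; reflexivity end end
  end.


Unset Implicit Arguments.

#[global] Instance to_s_SG (G : group) : isSG (to_s G).
Proof.
  split; simpl; intros; subst; auto.
  - apply gmulA. - apply gmul1. - apply gmulV.
Qed.

Lemma fp_app_l (A B : sgrp) (u w1 w2 : list (A + B)) :
  fp_rel w1 w2 -> fp_rel (u ++ w1) (u ++ w2).
Proof. intro h. pose proof (fp_cong u [] h) as h'. rewrite !app_nil_r in h'. exact h'. Qed.
Lemma fp_app_r (A B : sgrp) (v w1 w2 : list (A + B)) :
  fp_rel w1 w2 -> fp_rel (w1 ++ v) (w2 ++ v).
Proof. intro h. exact (fp_cong [] v h). Qed.

#[global] Instance FP_SG (A B : sgrp) `{isSG A} `{isSG B} : isSG (FP A B).
Proof.
  split; simpl.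
  - apply fp_refl.
  - apply fp_sym.
  - apply fp_trans.
  - intros. eapply fp_trans. apply fp_app_r; eauto. apply fp_app_l; eauto.
  - intros x x' h. induction h; simpl.
    + apply fp_refl.
    + apply fp_sym; auto.
    + eapply fp_trans; eauto.
    + rewrite !map_app, !rev_app_distr, <- !app_assoc. apply fp_app_l, fp_app_r; auto.
    + apply fp_eql. apply sg_invc; auto.
    + apply fp_eqr. apply sg_invc; auto.
    + eapply fp_trans. apply fp_eql. apply sg_inv_one. apply fp_onel.
    + eapply fp_trans. apply fp_eqr. apply sg_inv_one. apply fp_oner.
    + eapply fp_trans. apply fp_mull.
      apply fp_eql. rewrite sg_inv_mul; reflexivity.
    + eapply fp_trans. apply fp_mulr.
      apply fp_eqr. rewrite sg_inv_mul; reflexivity.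
  - intros. rewrite app_assoc. apply fp_refl.
  - intros; apply fp_refl.
  - intros x. induction x as [|l x IH]; simpl. apply fp_refl.
    rewrite <- app_assoc.
    change (fp_rel (rev (map (linv (B:=B)) x) ++ ([linv l; l] ++ x)) []).
    eapply fp_trans; [| exact IH].
    apply fp_app_l. change x with ([] ++ x) at 2. apply fp_app_r.
    destruct l as [a|b]; simpl.
    + eapply fp_trans. apply fp_mull. eapply fp_trans. apply fp_eql. apply sg_inv_l. apply fp_onel.
    + eapply fp_trans. apply fp_mulr. eapply fp_trans. apply fp_eqr. apply sg_inv_l. apply fp_oner.
Qed.

Definition tneg (A B : sgrp) (t : list (bool * A * B)) : list (bool * A * B) :=
  map (fun t => match t with (s, a, b) => (negb s, a, b) end) t.

Lemma t_app_l (A B : sgrp) (u w1 w2 : list (bool * A * B)) :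
  tens_rel w1 w2 -> tens_rel (u ++ w1) (u ++ w2).
Proof. intro h. pose proof (t_cong u [] h) as h'. rewrite !app_nil_r in h'. exact h'. Qed.
Lemma t_app_r (A B : sgrp) (v w1 w2 : list (bool * A * B)) :
  tens_rel w1 w2 -> tens_rel (w1 ++ v) (w2 ++ v).
Proof. intro h. exact (t_cong [] v h). Qed.

#[global] Instance Tens_SG (A B : sgrp) : isSG (Tens A B).
Proof.
  split; simpl.
  - apply t_refl.
  - apply t_sym.
  - apply t_trans.
  - intros. eapply t_trans. apply t_app_r; eauto. apply t_app_l; eauto.
  - intros x x' h. induction h; simpl.
    + apply t_refl.
    + apply t_sym; auto.
    + eapply t_trans; eauto.
    + rewrite !map_app. apply t_app_l, t_app_r; auto.
    + rewrite !map_app. apply t_comm.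
    + apply t_cancel.
    + apply t_eq; auto.
    + apply t_addl.
    + apply t_addr.
  - intros. rewrite app_assoc. apply t_refl.
  - intros; apply t_refl.
  - intros x. induction x as [|l x IH]; simpl. apply t_refl.
    destruct l as [[s a] b].
    set (M := map _ x) in *.
    apply t_trans with ((negb s, a, b) :: ((M ++ [(s,a,b)]) ++ x)).
    { rewrite <- app_assoc. apply t_refl. }
    apply t_trans with ((negb s, a, b) :: (([(s,a,b)] ++ M) ++ x)).
    { apply (@t_app_l A B [(negb s, a, b)]). apply t_app_r. apply t_comm. }
    change (tens_rel ([(negb s, a, b); (s,a,b)] ++ (M ++ x)) ([] ++ [])).
    eapply t_trans. apply t_app_l. exact IH. apply t_app_r.
    pose proof (t_cancel (negb s) a b) as h. rewrite negb_involutive in h. exact h.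
Qed.

Lemma Tens_comm (A B : sgrp) (x y : Tens A B) : sgeq (smul x y) (smul y x).
Proof. apply t_comm. Qed.

Definition ishom (K K' : sgrp) (f : K -> K') : Prop :=
  (forall x y, sgeq x y -> sgeq (f x) (f y)) /\
  (forall x y, sgeq (f (smul x y)) (smul (f x) (f y))) /\ sgeq (f sone) sone.
Arguments ishom {K K'} f.

Section Homs.
Context {K K' : sgrp} `{isSG K} `{isSG K'}.
Lemma hom_inv (f : K -> K') : ishom f -> forall x, sgeq (f (sinv x)) (sinv (f x)).
Proof.
  intros [hr [hm ho]] x.
  transitivity (smul (f (sinv x)) (smul (f x) (sinv (f x)))).
  { rewrite sg_inv_r, sg_one_r. reflexivity. }
  rewrite sg_assoc, <- hm, (hr _ _ (sg_inv_l x)), ho, sg_one_l. reflexivity.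
Qed.
Lemma hom_geval (f : K -> K') (r : nat -> K) e : ishom f ->
  sgeq (f (geval r e)) (geval (fun n => f (r n)) e).
Proof.
  intro hf. pose proof hf as [hr [hm ho]].
  induction e; simpl. reflexivity. exact ho.
  rewrite hm, IHe1, IHe2; reflexivity.
  rewrite hom_inv by exact hf. rewrite IHe; reflexivity.
Qed.
End Homs.

Lemma geval_ext {K : sgrp} `{isSG K} (r r' : nat -> K) e :
  (forall n, sgeq (r n) (r' n)) -> sgeq (geval r e) (geval r' e).
Proof.
  intro h. induction e; simpl; auto. reflexivity. rewrite IHe1, IHe2; reflexivity.
  rewrite IHe; reflexivity.
Qed.

Lemma hom_comp {K1 K2 K3 : sgrp} `{isSG K3} (f : K1 -> K2) (g : K2 -> K3) :
  ishom f -> ishom g -> ishom (fun x => g (f x)).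
Proof.
  intros [fr [fm fo]] [gr [gm go]]. split; [|split]; intros.
  - apply gr, fr; auto.
  - rewrite (gr _ _ (fm x y)). apply gm.
  - rewrite (gr _ _ fo). exact go.
Qed.

Lemma hom_id {K : sgrp} `{isSG K} : ishom (fun x : K => x).
Proof. split; [|split]; intros; auto; reflexivity. Qed.
Lemma hom_const1 {K K' : sgrp} `{isSG K'} : ishom (fun _ : K => @sone K').
Proof. split; [|split]; intros; try reflexivity. symmetry; apply sg_one_l. Qed.

Section Eval2.
Context {A B K : sgrp} `{isSG A} `{isSG B} `{isSG K}.
Lemma eval2_app (f : A -> K) (g : B -> K) (u v : FP A B) :
  sgeq (eval2 f g (u ++ v)) (smul (eval2 f g u) (eval2 f g v)).
Proof.
  induction u; simpl. symmetry; apply sg_one_l. rewrite IHu. apply sg_assoc.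
Qed.
Lemma eval2_hom (f : A -> K) (g : B -> K) : ishom f -> ishom g -> ishom (eval2 f g).
Proof.
  intros [fr [fm fo]] [gr [gm go]]. split; [|split].
  - intros x y h. induction h; simpl.
    + reflexivity. + symmetry; auto. + etransitivity; eauto.
    + rewrite !eval2_app, IHh. reflexivity.
    + rewrite (fr _ _ H2). reflexivity.
    + rewrite (gr _ _ H2). reflexivity.
    + rewrite fo. apply sg_one_l.
    + rewrite go. apply sg_one_l.
    + rewrite fm; gsolve.
    + rewrite gm; gsolve.
  - intros; apply eval2_app.
  - simpl; reflexivity.
Qed.
Lemma eval2_ext (f f' : A -> K) (g g' : B -> K) :
  (forall a, sgeq (f a) (f' a)) -> (forall b, sgeq (g b) (g' b)) ->
  forall w, sgeq (eval2 f g w) (eval2 f' g' w).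
Proof.
  intros hf hg w. induction w as [|[a|b] w IH]; simpl. reflexivity.
  rewrite hf, IH; reflexivity. rewrite hg, IH; reflexivity.
Qed.
End Eval2.

Lemma eval2_post {A B K K' : sgrp} `{isSG K} `{isSG K'} (phi : K -> K') (f : A -> K) (g : B -> K) :
  ishom phi -> forall w, sgeq (phi (eval2 f g w)) (eval2 (fun a => phi (f a)) (fun b => phi (g b)) w).
Proof.
  intros [pr [pm po]] w. induction w as [|[a|b] w IH]; simpl. exact po.
  rewrite pm, IH; reflexivity. rewrite pm, IH; reflexivity.
Qed.

Lemma eval2_fpmap {A B A' B' K : sgrp} (f : A' -> K) (g : B' -> K) (f' : A -> A') (g' : B -> B') w :
  eval2 f g (fpmap f' g' w) = eval2 (fun a => f (f' a)) (fun b => g (g' b)) w.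
Proof. induction w as [|[a|b] w IH]; simpl; rewrite ?IH; reflexivity. Qed.

Lemma fpmap_eval2 {A B A' B' : sgrp} (f : A -> A') (g : B -> B') w :
  fpmap f g w = eval2 (K := FP A' B') (fun a => @i1 A' B' (f a)) (fun b => @i2 A' B' (g b)) w.
Proof. induction w as [|[a|b] w IH]; simpl; rewrite ?IH; reflexivity. Qed.

Section Inj.
Context {A B : sgrp} `{isSG A} `{isSG B}.
Lemma i1_hom : ishom (K' := FP A B) (@i1 A B).
Proof.
  split; [|split]; intros; simpl.
  apply fp_eql; auto. apply fp_sym, fp_mull. apply fp_onel.
Qed.
Lemma i2_hom : ishom (K' := FP A B) (@i2 A B).
Proof.
  split; [|split]; intros; simpl.
  apply fp_eqr; auto. apply fp_sym, fp_mulr. apply fp_oner.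
Qed.
Lemma r1_hom : ishom (@r1 A B).
Proof. apply eval2_hom. apply hom_id. apply hom_const1. Qed.
Lemma r2_hom : ishom (@r2 A B).
Proof. apply eval2_hom. apply hom_const1. apply hom_id. Qed.
End Inj.

Lemma nabla_hom {A : sgrp} `{isSG A} : ishom (@nabla A).
Proof. apply eval2_hom; apply hom_id. Qed.

Lemma fpmap_hom {A B A' B' : sgrp} `{isSG A} `{isSG B} `{isSG A'} `{isSG B'}
  (f : A -> A') (g : B -> B') : ishom f -> ishom g -> ishom (fpmap f g).
Proof.
  intros hf hg.
  assert (E : ishom (eval2 (K:=FP A' B') (fun a => @i1 A' B' (f a)) (fun b => @i2 A' B' (g b)))).
  { apply eval2_hom; apply hom_comp; auto; [apply i1_hom|apply i2_hom]. }
  destruct E as [e1 [e2 e3]].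
  split; [|split]; intros; rewrite ?fpmap_eval2; auto.
Qed.

Section HomRw.
Context {K K' : sgrp} `{isSG K} `{isSG K'}.
Lemma hm {f : K -> K'} (hf : ishom f) x y : sgeq (f (smul x y)) (smul (f x) (f y)).
Proof. apply hf. Qed.
Lemma ho {f : K -> K'} (hf : ishom f) : sgeq (f sone) sone.
Proof. apply hf. Qed.
Lemma hi {f : K -> K'} (hf : ishom f) x : sgeq (f (sinv x)) (sinv (f x)).
Proof. apply hom_inv; auto. Qed.
Lemma hr {f : K -> K'} (hf : ishom f) x y : sgeq x y -> sgeq (f x) (f y).
Proof. apply hf. Qed.
End HomRw.

Lemma ghom_ishom (G H : group) (f : hom G H) : ishom (K := to_s G) (K' := to_s H) (hfun f).
Proof.
  split; [|split]; simpl.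
  - intros; subst; auto.
  - intros; apply hmulP.
  - assert (E : hfun f (gone G) = gmul H (hfun f (gone G)) (hfun f (gone G))).
    { rewrite <- hmulP, gmul1. reflexivity. }
    change (@sgeq (to_s H) (hfun f (gone G)) sone).
    transitivity (@smul (to_s H) (@sinv (to_s H) (hfun f (gone G))) (@smul (to_s H) (hfun f (gone G)) (hfun f (gone G)))).
    + rewrite sg_assoc, sg_inv_l, sg_one_l. reflexivity.
    + simpl. rewrite <- E. apply (sg_inv_l (K:=to_s H)).
Qed.

Section Main.
Context (G H : group).
Notation F := (FP (to_s G) (to_s H)).
Definition I1 (a : to_s G) : F := @i1 (to_s G) (to_s H) a.
Definition I2 (b : to_s H) : F := @i2 (to_s G) (to_s H) b.

Definition gen1 (s : bool) (a : G) (b : H) : F :=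
  if s then scomm (I1 a) (I2 b) else sinv (scomm (I1 a) (I2 b)).
Fixpoint Gam (t : list (bool * gcar G * gcar H)) : F :=
  match t with [] => sone | (s, a, b) :: t' => smul (gen1 s a b) (Gam t') end.

Lemma Gam_app t t' : Gam (t ++ t') = smul (Gam t) (Gam t').
Proof. induction t as [|[[s a] b] t IH]; simpl; rewrite ?IH; auto. apply app_assoc. Qed.

Lemma Gam_cons s a b t : Gam ((s, a, b) :: t) = smul (gen1 s a b) (Gam t).
Proof. reflexivity. Qed.
Lemma Gam_nil : Gam [] = sone.
Proof. reflexivity. Qed.

Lemma I1_hom : ishom I1. Proof. apply i1_hom. Qed.
Lemma I2_hom : ishom I2. Proof. apply i2_hom. Qed.

Lemma R1_hom : ishom (@r1 (to_s G) (to_s H)). Proof. apply r1_hom. Qed.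
Lemma R2_hom : ishom (@r2 (to_s G) (to_s H)). Proof. apply r2_hom. Qed.
Lemma r1_I1 a : sgeq (r1 (I1 a)) a.
Proof. apply (sg_one_r (K:=to_s G)). Qed.
Lemma r1_I2 b : sgeq (r1 (I2 b)) sone.
Proof. apply (sg_one_r (K:=to_s G)). Qed.
Lemma r2_I1 a : sgeq (r2 (I1 a)) sone.
Proof. apply (sg_one_r (K:=to_s H)). Qed.
Lemma r2_I2 b : sgeq (r2 (I2 b)) b.
Proof. apply (sg_one_r (K:=to_s H)). Qed.

Lemma Bker_gen1 s a b : Bker (gen1 s a b).
Proof.
  split; destruct s; unfold gen1, scomm;
  rewrite ?(hi R1_hom), ?(hm R1_hom), ?(hi R1_hom), ?(hi R2_hom), ?(hm R2_hom), ?(hi R2_hom),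
    ?r1_I1, ?r1_I2, ?r2_I1, ?r2_I2; gsolve.
Qed.

Lemma Bker_mul (x y : F) : Bker x -> Bker y -> Bker (smul x y).
Proof.
  intros [h1 h2] [h3 h4]. split.
  rewrite (hm R1_hom), h1, h3. apply sg_one_l.
  rewrite (hm R2_hom), h2, h4. apply sg_one_l.
Qed.
Lemma Bker_inv (x : F) : Bker x -> Bker (sinv x).
Proof.
  intros [h1 h2]. split.
  rewrite (hi R1_hom), h1. apply sg_inv_one.
  rewrite (hi R2_hom), h2. apply sg_inv_one.
Qed.
Lemma Bker_eq (x y : F) : Bker x -> sgeq x y -> Bker y.
Proof.
  intros [h1 h2] e. split.
  rewrite <- (hr R1_hom _ _ e); auto. rewrite <- (hr R2_hom _ _ e); auto.
Qed.
Lemma Bker_one : Bker (sone : F).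
Proof. split; reflexivity. Qed.

Lemma Bker_Gam t : Bker (Gam t).
Proof.
  induction t as [|[[s a] b] t IH]; simpl. apply Bker_one.
  apply Bker_mul; auto. apply Bker_gen1.
Qed.

Lemma normal_form (w : F) : exists t, sgeq w (smul (Gam t) (smul (I1 (r1 w)) (I2 (r2 w)))).
Proof.
  induction w as [|l w IH] using rev_ind.
  - exists []. simpl Gam.
    change (r1 []) with (@sone (to_s G)). change (r2 []) with (@sone (to_s H)).
    rewrite (ho I1_hom), (ho I2_hom). gsolve.
  - destruct IH as [t IH].
    assert (E1 : r1 (w ++ [l]) = gmul G (r1 w) (r1 [l])) by exact (eval2_app (K:=to_s G) _ _ w [l]).
    assert (E2 : r2 (w ++ [l]) = gmul H (r2 w) (r2 [l])) by exact (eval2_app (K:=to_s H) _ _ w [l]).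
    rewrite E1, E2. clear E1 E2.
    set (g := r1 w) in *. set (h := r2 w) in *. clearbody g h.
    destruct l as [g0|h0].
    + exists (t ++ [(true, g, h); (false, gmul G g g0, h)]).
      change (w ++ [inl g0]) with (smul (s := F) w (I1 g0)). rewrite IH. clear IH.
      change (r1 [inl g0]) with (smul (s:=to_s G) g0 sone).
      change (r2 [inl g0]) with (smul (s:=to_s H) sone sone).
      change (gmul G g (smul (s:=to_s G) g0 sone)) with (smul (s:=to_s G) g (smul (s:=to_s G) g0 sone)).
      change (gmul H h (smul (s:=to_s H) sone sone)) with (smul (s:=to_s H) h (smul (s:=to_s H) sone sone)).
      change (gmul G g g0) with (smul (s:=to_s G) g g0).
      rewrite Gam_app, !Gam_cons. change (Gam []) with (@sone F). unfold gen1, scomm.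
      rewrite ?(hm I1_hom), ?(hm I2_hom), ?(ho I1_hom), ?(ho I2_hom). gsolve.
    + exists t.
      change (w ++ [inr h0]) with (smul (s := F) w (I2 h0)). rewrite IH. clear IH.
      change (r1 [inr h0]) with (smul (s:=to_s G) sone sone).
      change (r2 [inr h0]) with (smul (s:=to_s H) h0 sone).
      change (gmul G g (smul (s:=to_s G) sone sone)) with (smul (s:=to_s G) g (smul (s:=to_s G) sone sone)).
      change (gmul H h (smul (s:=to_s H) h0 sone)) with (smul (s:=to_s H) h (smul (s:=to_s H) h0 sone)).
      rewrite ?(hm I1_hom), ?(hm I2_hom), ?(ho I1_hom), ?(ho I2_hom). gsolve.
Qed.

End Main.
Arguments I1 {G H} a.
Arguments I2 {G H} b.
Arguments gen1 {G H} s a b.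
Arguments Gam {G H} t.
Arguments R1_hom {G H}.
Arguments R2_hom {G H}.
Arguments I1_hom {G H}.
Arguments I2_hom {G H}.

Lemma hom_conj_one {K K' : sgrp} `{isSG K} `{isSG K'} (f : K -> K') (hf : ishom f) (x y : K) :
  sgeq (f x) sone -> sgeq (f (smul (smul y x) (sinv y))) sone.
Proof. intro h. rewrite !(hm hf), (hi hf), h. gsolve. Qed.

Lemma fpmap_fpmap {A B A' B' A'' B'' : sgrp} (f : A -> A') (g : B -> B') (f' : A' -> A'') (g' : B' -> B'') w :
  fpmap f' g' (fpmap f g w) = fpmap (fun a => f' (f a)) (fun b => g' (g b)) w.
Proof. induction w as [|[a|b] w IH]; simpl; rewrite ?IH; reflexivity. Qed.

Lemma fpmap_id {A B : sgrp} (w : FP A B) : fpmap (fun a => a) (fun b => b) w = w.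
Proof. induction w as [|[a|b] w IH]; simpl; rewrite ?IH; reflexivity. Qed.

Lemma fpmap_ext {A B A' B' : sgrp} `{isSG A'} `{isSG B'} (f f' : A -> A') (g g' : B -> B') :
  (forall a, sgeq (f a) (f' a)) -> (forall b, sgeq (g b) (g' b)) ->
  forall w, sgeq (fpmap f g w) (fpmap f' g' w).
Proof.
  intros hf hg w. rewrite !fpmap_eval2. apply eval2_ext.
  intro a. apply (hr i1_hom); auto. intro b. apply (hr i2_hom); auto.
Qed.

Section NSide.
Context (G H : group).
Notation F := (FP (to_s G) (to_s H)).
Notation GG := (FP (to_s G) (to_s G)).
Notation HH := (FP (to_s H) (to_s H)).

Lemma N1_conj (x y : F) : N1 x -> N1 (smul (smul y x) (sinv y)).
Proof.
  intros [z [[hz1 hz2] [hz3 [hz4 hz5]]]].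
  set (L := fpmap (fun g : to_s G => @i1 (to_s G) (to_s G) g) (fun h : to_s H => h) y).
  exists (smul (smul L z) (sinv L)). split; [split|split; [|split]].
  - apply hom_conj_one; auto. apply r1_hom.
  - apply hom_conj_one; auto. apply r2_hom.
  - apply hom_conj_one; auto. apply fpmap_hom. apply r1_hom. apply hom_id.
  - apply hom_conj_one; auto. apply fpmap_hom. apply r2_hom. apply hom_id.
  - assert (hom1 : ishom (fpmap (@nabla (to_s G)) (fun h : to_s H => h))).
    { apply fpmap_hom. apply nabla_hom. apply hom_id. }
    rewrite !(hm hom1), (hi hom1), <- hz5.
    assert (E : sgeq (fpmap (@nabla (to_s G)) (fun h : to_s H => h) L) y).
    { unfold L. rewrite fpmap_fpmap. rewrite <- (fpmap_id y) at 2.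
      apply fpmap_ext. intro a. apply (sg_one_r (K:=to_s G)). intro; reflexivity. }
    rewrite E. reflexivity.
Qed.

Lemma N2_conj (x y : F) : N2 x -> N2 (smul (smul y x) (sinv y)).
Proof.
  intros [z [[hz1 hz2] [hz3 [hz4 hz5]]]].
  set (L := fpmap (fun g : to_s G => g) (fun h : to_s H => @i1 (to_s H) (to_s H) h) y).
  exists (smul (smul L z) (sinv L)). split; [split|split; [|split]].
  - apply hom_conj_one; auto. apply r1_hom.
  - apply hom_conj_one; auto. apply r2_hom.
  - apply hom_conj_one; auto. apply fpmap_hom. apply hom_id. apply r1_hom.
  - apply hom_conj_one; auto. apply fpmap_hom. apply hom_id. apply r2_hom.
  - assert (hom1 : ishom (fpmap (fun g : to_s G => g) (@nabla (to_s H)))).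
    { apply fpmap_hom. apply hom_id. apply nabla_hom. }
    rewrite !(hm hom1), (hi hom1), <- hz5.
    assert (E : sgeq (fpmap (fun g : to_s G => g) (@nabla (to_s H)) L) y).
    { unfold L. rewrite fpmap_fpmap. rewrite <- (fpmap_id y) at 2.
      apply fpmap_ext. intro; reflexivity. intro a. apply (sg_one_r (K:=to_s H)). }
    rewrite E. reflexivity.
Qed.

Definition NS (x : F) : Prop := N1 x \/ N2 x.

Lemma sgen_conj (x y : F) : sgen NS x -> sgen NS (smul (smul y x) (sinv y)).
Proof.
  intro h. induction h.
  - apply sgen_in. destruct H0. left; apply N1_conj; auto. right; apply N2_conj; auto.
  - eapply sgen_eq. apply sgen_one. gsolve.
  - eapply sgen_eq. apply sgen_mul; [exact IHh1 | exact IHh2]. gsolve.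
  - eapply sgen_eq. apply sgen_inv; exact IHh. gsolve.
  - eapply sgen_eq. exact IHh. rewrite H0. reflexivity.
Qed.

Definition Q : sgrp := @SGrp F (T11rel G H) (@smul F) (@sone F) (@sinv F).

Lemma T11_of_fp (x y : F) : sgeq x y -> T11rel G H x y.
Proof.
  intro e. unfold T11rel. eapply sgen_eq. apply sgen_one. rewrite e. symmetry. apply sg_inv_r.
Qed.

#[global] Instance Q_SG : isSG Q.
Proof.
  assert (R : forall x y : F, sgeq x y -> @sgeq Q x y) by exact T11_of_fp.
  split; cbn [sgeq smul sone sinv Q]; unfold T11rel.
  - intros; apply T11_of_fp; reflexivity.
  - intros x y h. eapply sgen_eq. apply sgen_inv. exact h. gsolve.
  - intros x y z h1 h2. eapply sgen_eq. apply sgen_mul. exact h1. exact h2. gsolve.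
  - intros x x' y y' h1 h2. eapply sgen_eq. apply sgen_mul. apply (sgen_conj _ x) in h2. exact h2. exact h1.
    gsolve.
  - intros x x' h. eapply sgen_eq. apply (sgen_conj (@sinv F (@smul F x (@sinv F x'))) (@sinv F x)). apply sgen_inv. exact h. gsolve.
  - intros; apply R; apply sg_assoc.
  - intros; apply R; apply sg_one_l.
  - intros; apply R; apply sg_inv_l.
Qed.

End NSide.

#[global] Instance I1_Proper G H : Proper (sgeq ==> sgeq) (@I1 G H).
Proof. intros x y e. apply (hr I1_hom); auto. Qed.
#[global] Instance I2_Proper G H : Proper (sgeq ==> sgeq) (@I2 G H).
Proof. intros x y e. apply (hr I2_hom); auto. Qed.

Section Gens.
Context (G H : group).
Notation F := (FP (to_s G) (to_s H)).
Notation GG := (FP (to_s G) (to_s G)).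
Notation HH := (FP (to_s H) (to_s H)).
Notation QQ := (Q G H).

Definition ia (a : to_s G) : GG := @i1 (to_s G) (to_s G) a.
Definition ib (a : to_s G) : GG := @i2 (to_s G) (to_s G) a.
Definition ja (b : to_s H) : HH := @i1 (to_s H) (to_s H) b.
Definition jb (b : to_s H) : HH := @i2 (to_s H) (to_s H) b.
Definition J1 (u : GG) : FP GG (to_s H) := @i1 GG (to_s H) u.
Definition J2 (b : to_s H) : FP GG (to_s H) := @i2 GG (to_s H) b.
Definition K1 (a : to_s G) : FP (to_s G) HH := @i1 (to_s G) HH a.
Definition K2 (v : HH) : FP (to_s G) HH := @i2 (to_s G) HH v.

Definition BB (a : to_s G) (b : to_s H) : F := scomm (@I1 G H a) (@I2 G H b).

Lemma e_r1_J1 u : sgeq (r1 (J1 u)) u. Proof. apply sg_one_r. Qed.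
Lemma e_r1_J2 b : sgeq (r1 (J2 b)) sone. Proof. apply sg_one_r. Qed.
Lemma e_r2_J1 u : sgeq (r2 (J1 u)) sone. Proof. apply (sg_one_r (K:=to_s H)). Qed.
Lemma e_r2_J2 b : sgeq (r2 (J2 b)) b. Proof. apply (sg_one_r (K:=to_s H)). Qed.
Lemma e_r1_K1 a : sgeq (r1 (K1 a)) a. Proof. apply (sg_one_r (K:=to_s G)). Qed.
Lemma e_r1_K2 v : sgeq (r1 (K2 v)) sone. Proof. apply (sg_one_r (K:=to_s G)). Qed.
Lemma e_r2_K1 a : sgeq (r2 (K1 a)) sone. Proof. apply sg_one_r. Qed.
Lemma e_r2_K2 v : sgeq (r2 (K2 v)) v. Proof. apply sg_one_r. Qed.

Lemma e_f_J1 (f : GG -> to_s G) u : sgeq (fpmap f (fun h : to_s H => h) (J1 u)) (I1 (f u)).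
Proof. reflexivity. Qed.
Lemma e_f_J2 (f : GG -> to_s G) b : sgeq (fpmap f (fun h : to_s H => h) (J2 b)) (I2 b).
Proof. reflexivity. Qed.
Lemma e_f_K1 (f : HH -> to_s H) a : sgeq (fpmap (fun g : to_s G => g) f (K1 a)) (I1 a).
Proof. reflexivity. Qed.
Lemma e_f_K2 (f : HH -> to_s H) v : sgeq (fpmap (fun g : to_s G => g) f (K2 v)) (I2 (f v)).
Proof. reflexivity. Qed.

Lemma e_r1_ia a : sgeq (r1 (ia a)) a. Proof. apply (sg_one_r (K:=to_s G)). Qed.
Lemma e_r1_ib a : sgeq (r1 (ib a)) sone. Proof. apply (sg_one_r (K:=to_s G)). Qed.
Lemma e_r2_ia a : sgeq (r2 (ia a)) sone. Proof. apply (sg_one_r (K:=to_s G)). Qed.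
Lemma e_r2_ib a : sgeq (r2 (ib a)) a. Proof. apply (sg_one_r (K:=to_s G)). Qed.
Lemma e_n_ia a : sgeq (nabla (ia a)) a. Proof. apply (sg_one_r (K:=to_s G)). Qed.
Lemma e_n_ib a : sgeq (nabla (ib a)) a. Proof. apply (sg_one_r (K:=to_s G)). Qed.
Lemma e_r1_ja a : sgeq (r1 (ja a)) a. Proof. apply (sg_one_r (K:=to_s H)). Qed.
Lemma e_r1_jb a : sgeq (r1 (jb a)) sone. Proof. apply (sg_one_r (K:=to_s H)). Qed.
Lemma e_r2_ja a : sgeq (r2 (ja a)) sone. Proof. apply (sg_one_r (K:=to_s H)). Qed.
Lemma e_r2_jb a : sgeq (r2 (jb a)) a. Proof. apply (sg_one_r (K:=to_s H)). Qed.
Lemma e_n_ja a : sgeq (nabla (ja a)) a. Proof. apply (sg_one_r (K:=to_s H)). Qed.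
Lemma e_n_jb a : sgeq (nabla (jb a)) a. Proof. apply (sg_one_r (K:=to_s H)). Qed.

Lemma hR1 : ishom (@r1 GG (to_s H)). Proof. apply r1_hom. Qed.
Lemma hR2 : ishom (@r2 GG (to_s H)). Proof. apply r2_hom. Qed.
Lemma hS1 : ishom (@r1 (to_s G) HH). Proof. apply r1_hom. Qed.
Lemma hS2 : ishom (@r2 (to_s G) HH). Proof. apply r2_hom. Qed.
Lemma hM1 : ishom (fpmap (@r1 (to_s G) (to_s G)) (fun h : to_s H => h)).
Proof. apply fpmap_hom. apply r1_hom. apply hom_id. Qed.
Lemma hM2 : ishom (fpmap (@r2 (to_s G) (to_s G)) (fun h : to_s H => h)).
Proof. apply fpmap_hom. apply r2_hom. apply hom_id. Qed.
Lemma hMn : ishom (fpmap (@nabla (to_s G)) (fun h : to_s H => h)).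
Proof. apply fpmap_hom. apply nabla_hom. apply hom_id. Qed.
Lemma hP1 : ishom (fpmap (fun g : to_s G => g) (@r1 (to_s H) (to_s H))).
Proof. apply fpmap_hom. apply hom_id. apply r1_hom. Qed.
Lemma hP2 : ishom (fpmap (fun g : to_s G => g) (@r2 (to_s H) (to_s H))).
Proof. apply fpmap_hom. apply hom_id. apply r2_hom. Qed.
Lemma hPn : ishom (fpmap (fun g : to_s G => g) (@nabla (to_s H))).
Proof. apply fpmap_hom. apply hom_id. apply nabla_hom. Qed.

Ltac pushN1 :=
  unfold scomm;
  repeat progress (rewrite ?(hm hR1), ?(hi hR1), ?(hm hR2), ?(hi hR2),
    ?(hm hM1), ?(hi hM1), ?(hm hM2), ?(hi hM2), ?(hm hMn), ?(hi hMn));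
  rewrite ?e_r1_J1, ?e_r1_J2, ?e_r2_J1, ?e_r2_J2, ?e_f_J1, ?e_f_J2;
  rewrite ?e_r1_ia, ?e_r1_ib, ?e_r2_ia, ?e_r2_ib, ?e_n_ia, ?e_n_ib, ?(ho (@I1_hom G H)), ?(ho (@I2_hom G H)).

Lemma gen_G1 a b a' b' : N1 (scomm (BB a b) (BB a' b')).
Proof.
  exists (scomm (scomm (J1 (ia a)) (J2 b)) (scomm (J1 (ib a')) (J2 b'))).
  split; [split|split; [|split]]; unfold BB; pushN1; first [gsolve | exact sone].
Qed.

Lemma gen_G2 a a' b : N1 (smul (smul (BB (smul a a') b) (sinv (BB a' b))) (sinv (BB a b))).
Proof.
  exists (smul (smul (scomm (smul (J1 (ia a)) (J1 (ib a'))) (J2 b)) (sinv (scomm (J1 (ib a')) (J2 b))))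
     (sinv (scomm (J1 (ia a)) (J2 b)))).
  split; [split|split; [|split]]; unfold BB; pushN1; rewrite ?(hm (@I1_hom G H)); first [gsolve | exact sone].
Qed.

Ltac pushN2 :=
  unfold scomm;
  repeat progress (rewrite ?(hm hS1), ?(hi hS1), ?(hm hS2), ?(hi hS2),
    ?(hm hP1), ?(hi hP1), ?(hm hP2), ?(hi hP2), ?(hm hPn), ?(hi hPn));
  rewrite ?e_r1_K1, ?e_r1_K2, ?e_r2_K1, ?e_r2_K2, ?e_f_K1, ?e_f_K2;
  rewrite ?e_r1_ja, ?e_r1_jb, ?e_r2_ja, ?e_r2_jb, ?e_n_ja, ?e_n_jb, ?(ho (@I1_hom G H)), ?(ho (@I2_hom G H)).

Lemma gen_G3 a b b' : N2 (smul (smul (BB a (smul b b')) (sinv (BB a b'))) (sinv (BB a b))).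
Proof.
  exists (smul (smul (scomm (K1 a) (smul (K2 (ja b)) (K2 (jb b')))) (sinv (scomm (K1 a) (K2 (jb b')))))
     (sinv (scomm (K1 a) (K2 (ja b))))).
  split; [split|split; [|split]]; unfold BB; pushN2; rewrite ?(hm (@I2_hom G H)); first [gsolve | exact sone].
Qed.

End Gens.

Section Comm.
Context {K : sgrp} `{isSG K}.
Definition commute (x y : K) := sgeq (smul x y) (smul y x).
Lemma comm_sym x y : commute x y -> commute y x.
Proof. unfold commute; intro h; symmetry; auto. Qed.
Lemma comm_inv_l x y : commute x y -> commute (sinv x) y.
Proof.
  unfold commute; intro h.
  transitivity (smul (smul (sinv x) (smul y x)) (sinv x)). gsolve.
  rewrite <- h. gsolve.
Qed.
Lemma comm_mul_l x y z : commute x z -> commute y z -> commute (smul x y) z.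
Proof.
  unfold commute; intros h1 h2.
  transitivity (smul x (smul y z)). gsolve. rewrite h2.
  transitivity (smul (smul x z) y). gsolve. rewrite h1. gsolve.
Qed.
Lemma commute_eq x y : commute x y -> sgeq (smul x y) (smul y x).
Proof. auto. Qed.
Lemma comm_one_l y : commute sone y.
Proof. unfold commute. gsolve. Qed.
End Comm.

Section QLemmas.
Context (G H : group).
Notation F := (FP (to_s G) (to_s H)).
Notation QQ := (Q G H).
Notation QE x y := (@sgeq QQ x y).

Definition BQ (a : to_s G) (b : to_s H) : QQ := BB G H a b.
Definition gQ s (a : to_s G) (b : to_s H) : QQ := gen1 s a b.
Definition GQ (t : list (bool * gcar G * gcar H)) : QQ := Gam t.

Lemma GQ_app t t' : GQ (t ++ t') = smul (GQ t) (GQ t').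
Proof. apply Gam_app. Qed.
Lemma GQ_cons s a b t : GQ ((s, a, b) :: t) = smul (gQ s a b) (GQ t).
Proof. reflexivity. Qed.
Lemma GQ_nil : GQ [] = sone.
Proof. reflexivity. Qed.
Lemma gQ_true a b : gQ true a b = BQ a b. Proof. reflexivity. Qed.
Lemma gQ_false a b : gQ false a b = sinv (BQ a b). Proof. reflexivity. Qed.

Lemma QE_fp (x y : F) : sgeq x y -> QE x y.
Proof. apply T11_of_fp. Qed.

Lemma QE_N1 (x : F) : N1 x -> QE x sone.
Proof.
  intro h. change (sgen (fun z => N1 z \/ N2 z) (smul x (sinv sone))).
  eapply sgen_eq. apply sgen_in. left; exact h. gsolve.
Qed.
Lemma QE_N2 (x : F) : N2 x -> QE x sone.
Proof.
  intro h. change (sgen (fun z => N1 z \/ N2 z) (smul x (sinv sone))).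
  eapply sgen_eq. apply sgen_in. right; exact h. gsolve.
Qed.

Lemma BB_comm a b a' b' : commute (K:=QQ) (BQ a b) (BQ a' b').
Proof.
  unfold commute. pose proof (QE_N1 _ (gen_G1 G H a b a' b')) as h.
  change (QE (scomm (BQ a b) (BQ a' b')) sone) in h.
  transitivity (smul (scomm (BQ a b) (BQ a' b')) (smul (BQ a' b') (BQ a b))).
  gsolve. rewrite h. gsolve.
Qed.

Lemma BB_mul_l a a' b : QE (BQ (smul a a') b) (smul (BQ a b) (BQ a' b)).
Proof.
  pose proof (QE_N1 _ (gen_G2 G H a a' b)) as h.
  change (QE (smul (smul (BQ (smul a a') b) (sinv (BQ a' b))) (sinv (BQ a b))) sone) in h.
  transitivity (smul (smul (smul (BQ (smul a a') b) (sinv (BQ a' b))) (sinv (BQ a b)))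
                  (smul (BQ a b) (BQ a' b))).
  gsolve. rewrite h. gsolve.
Qed.
Lemma BB_mul_r a b b' : QE (BQ a (smul b b')) (smul (BQ a b) (BQ a b')).
Proof.
  pose proof (QE_N2 _ (gen_G3 G H a b b')) as h.
  change (QE (smul (smul (BQ a (smul b b')) (sinv (BQ a b'))) (sinv (BQ a b))) sone) in h.
  transitivity (smul (smul (smul (BQ a (smul b b')) (sinv (BQ a b'))) (sinv (BQ a b)))
                  (smul (BQ a b) (BQ a b'))).
  gsolve. rewrite h. gsolve.
Qed.
Lemma BB_eq_l a a' b : sgeq a a' -> QE (BQ a b) (BQ a' b).
Proof. intro e. apply QE_fp. unfold BQ, BB, scomm. rewrite e. reflexivity. Qed.
Lemma BB_eq_r a b b' : sgeq b b' -> QE (BQ a b) (BQ a b').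
Proof. intro e. apply QE_fp. unfold BQ, BB, scomm. rewrite e. reflexivity. Qed.
Lemma BB_one_l b : QE (BQ sone b) sone.
Proof. apply QE_fp. unfold BQ, BB, scomm. rewrite (ho I1_hom). gsolve. Qed.
Lemma BB_one_r a : QE (BQ a sone) sone.
Proof. apply QE_fp. unfold BQ, BB, scomm. rewrite (ho I2_hom). gsolve. Qed.

Lemma BB_inv_l a b : QE (BQ (sinv a) b) (sinv (BQ a b)).
Proof.
  assert (E : QE (smul (BQ a b) (BQ (sinv a) b)) sone).
  { rewrite <- BB_mul_l. rewrite <- (BB_one_l b). apply BB_eq_l. apply sg_inv_r. }
  transitivity (smul (sinv (BQ a b)) (smul (BQ a b) (BQ (sinv a) b))). gsolve.
  rewrite E. gsolve.
Qed.
Lemma BB_inv_r a b : QE (BQ a (sinv b)) (sinv (BQ a b)).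
Proof.
  assert (E : QE (smul (BQ a b) (BQ a (sinv b))) sone).
  { rewrite <- BB_mul_r. rewrite <- (BB_one_r a). apply BB_eq_r. apply sg_inv_r. }
  transitivity (smul (sinv (BQ a b)) (smul (BQ a b) (BQ a (sinv b)))). gsolve.
  rewrite E. gsolve.
Qed.

Lemma BB_cs_l (c : G) b : comm_sub c -> QE (BQ c b) sone.
Proof.
  intro hc. induction hc as [p q| |x y _ IHx _ IHy|x _ IH].
  - change (gcomm p q) with (@smul (to_s G) (@smul (to_s G) (@smul (to_s G) p q) (@sinv (to_s G) p)) (@sinv (to_s G) q)).
    rewrite !BB_mul_l, !BB_inv_l. rewrite (commute_eq _ _ (BB_comm p b q b)). gsolve.
  - apply BB_one_l.
  - change (gmul G x y) with (smul (s:=to_s G) x y). rewrite BB_mul_l, IHx, IHy. gsolve.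
  - change (ginv G x) with (sinv (s:=to_s G) x). rewrite BB_inv_l, IH. gsolve.
Qed.
Lemma BB_cs_r a (d : H) : comm_sub d -> QE (BQ a d) sone.
Proof.
  intro hc. induction hc as [p q| |x y _ IHx _ IHy|x _ IH].
  - change (gcomm p q) with (@smul (to_s H) (@smul (to_s H) (@smul (to_s H) p q) (@sinv (to_s H) p)) (@sinv (to_s H) q)).
    rewrite !BB_mul_r, !BB_inv_r. rewrite (commute_eq _ _ (BB_comm a p a q)). gsolve.
  - apply BB_one_r.
  - change (gmul H x y) with (smul (s:=to_s H) x y). rewrite BB_mul_r, IHx, IHy. gsolve.
  - change (ginv H x) with (sinv (s:=to_s H) x). rewrite BB_inv_r, IH. gsolve.
Qed.

Lemma gen1_comm s a b s' a' b' : commute (K:=QQ) (gQ s a b) (gQ s' a' b').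
Proof.
  pose proof (BB_comm a b a' b') as h.
  destruct s, s'; repeat rewrite gQ_true; repeat rewrite gQ_false.
  - exact h.
  - apply comm_sym, comm_inv_l, comm_sym, h.
  - apply comm_inv_l, h.
  - apply comm_inv_l, comm_sym, comm_inv_l, comm_sym, h.
Qed.

Lemma Gam_comm_gen t s a b : commute (K:=QQ) (GQ t) (gQ s a b).
Proof.
  induction t as [|[[s' a'] b'] t IH]. rewrite GQ_nil; apply comm_one_l.
  rewrite GQ_cons. apply comm_mul_l; auto. apply gen1_comm.
Qed.
Lemma Gam_comm t t' : commute (K:=QQ) (GQ t) (GQ t').
Proof.
  apply comm_sym. induction t' as [|[[s' a'] b'] t' IH]. rewrite GQ_nil; apply comm_one_l.
  rewrite GQ_cons. apply comm_mul_l; auto. apply comm_sym, Gam_comm_gen.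
Qed.

Lemma W (t t' : Tens (ab G) (ab H)) : sgeq t t' -> QE (GQ t) (GQ t').
Proof.
  intro h. induction h.
  - reflexivity.
  - symmetry; auto.
  - etransitivity; eauto.
  - rewrite !GQ_app. rewrite IHh. reflexivity.
  - rewrite !GQ_app. apply Gam_comm.
  - rewrite !GQ_cons; change (GQ nil) with (@sone QQ). destruct s; repeat rewrite gQ_true; repeat rewrite gQ_false; gsolve.
  - rewrite !GQ_cons; change (GQ nil) with (@sone QQ).
    assert (E : QE (BQ a b) (BQ a' b')).
    { simpl in H0, H1.
      transitivity (BQ (@smul (to_s G) (gmul G a (ginv G a')) a') (@smul (to_s H) (gmul H b (ginv H b')) b')).
      { transitivity (BQ (@smul (to_s G) (gmul G a (ginv G a')) a') b).
        apply BB_eq_l. change (@sgeq (to_s G) a (@smul (to_s G) (@smul (to_s G) a (@sinv (to_s G) a')) a')). gsolve.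
        apply BB_eq_r. change (@sgeq (to_s H) b (@smul (to_s H) (@smul (to_s H) b (@sinv (to_s H) b')) b')). gsolve. }
      rewrite BB_mul_l, !BB_mul_r, (BB_cs_l _ (gmul H b (ginv H b')) H0), (BB_cs_l _ b' H0), (BB_cs_r a' _ H1).
      gsolve. }
    destruct s; repeat rewrite gQ_true; repeat rewrite gQ_false; rewrite E; reflexivity.
  - rewrite !GQ_cons; change (GQ nil) with (@sone QQ).
    change (@smul (ab G) a a') with (@smul (to_s G) a a').
    destruct s; repeat rewrite gQ_false; rewrite BB_mul_l; [unfold gQ, gen1, BQ, BB; gsolve|].
    rewrite (commute_eq _ _ (BB_comm a b a' b)). gsolve.
  - rewrite !GQ_cons; change (GQ nil) with (@sone QQ).
    change (@smul (ab H) b b') with (@smul (to_s H) b b').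
    destruct s; repeat rewrite gQ_false; rewrite BB_mul_r; [unfold gQ, gen1, BQ, BB; gsolve|].
    rewrite (commute_eq _ _ (BB_comm a b a b')). gsolve.
Qed.

End QLemmas.

Section PhiSec.
Context (G H : group).
Notation F := (FP (to_s G) (to_s H)).
Notation T := (Tens (ab G) (ab H)).
Notation TE x y := (@sgeq T x y).

Definition st (a : G) (b : H) : T := [(true, a, b)].

Fixpoint Phi (w : list (to_s G + to_s H)) : T :=
  match w with
  | [] => []
  | inl g :: w' => (true, g, @r2 (to_s G) (to_s H) w') :: Phi w'
  | inr _ :: w' => Phi w'
  end.

Lemma Phi_cons_l g w : Phi (inl g :: w) = smul (st g (r2 w)) (Phi w).
Proof. reflexivity. Qed.
Lemma Phi_cons_r h w : Phi (inr h :: w) = Phi w.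
Proof. reflexivity. Qed.

Lemma st_mul_l a a' b : TE (st (gmul G a a') b) (smul (st a b) (st a' b)).
Proof. apply t_addl. Qed.
Lemma st_mul_r a b b' : TE (st a (gmul H b b')) (smul (st a b) (st a b')).
Proof. apply t_addr. Qed.
Lemma st_one_l b : TE (st (gone G) b) sone.
Proof.
  pose proof (st_mul_l (gone G) (gone G) b) as h. rewrite gmul1 in h.
  transitivity (smul (sinv (st (gone G) b)) (smul (st (gone G) b) (st (gone G) b))).
  gsolve. rewrite <- h. gsolve.
Qed.
Lemma st_one_r a : TE (st a (gone H)) sone.
Proof.
  pose proof (st_mul_r a (gone H) (gone H)) as h. rewrite gmul1 in h.
  transitivity (smul (sinv (st a (gone H))) (smul (st a (gone H)) (st a (gone H)))).
  gsolve. rewrite <- h. gsolve.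
Qed.
Lemma st_inv_l a b : TE (st (ginv G a) b) (sinv (st a b)).
Proof.
  assert (E : TE (smul (st a b) (st (ginv G a) b)) sone).
  { rewrite <- st_mul_l. rewrite <- (st_one_l b).
    replace (gmul G a (ginv G a)) with (gone G). reflexivity.
    symmetry. exact (sg_inv_r (K:=to_s G) a). }
  transitivity (smul (sinv (st a b)) (smul (st a b) (st (ginv G a) b))). gsolve.
  rewrite E. gsolve.
Qed.
Lemma st_inv_r a b : TE (st a (ginv H b)) (sinv (st a b)).
Proof.
  assert (E : TE (smul (st a b) (st a (ginv H b))) sone).
  { rewrite <- st_mul_r. rewrite <- (st_one_r a).
    replace (gmul H b (ginv H b)) with (gone H). reflexivity.
    symmetry. exact (sg_inv_r (K:=to_s H) b). }
  transitivity (smul (sinv (st a b)) (smul (st a b) (st a (ginv H b)))). gsolve.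
  rewrite E. gsolve.
Qed.

Lemma r1_app (u v : F) : r1 (u ++ v) = gmul G (r1 u) (r1 v).
Proof. exact (eval2_app (K:=to_s G) _ _ u v). Qed.
Lemma r2_app (u v : F) : r2 (u ++ v) = gmul H (r2 u) (r2 v).
Proof. exact (eval2_app (K:=to_s H) _ _ u v). Qed.

Lemma Phi_app (u v : F) : TE (Phi (u ++ v)) (smul (smul (Phi u) (Phi v)) (st (r1 u) (r2 v))).
Proof.
  induction u as [|[g|h] u IH].
  - change (r1 []) with (gone G). rewrite st_one_l. change ([] ++ v) with v. change (Phi []) with (@sone T). gsolve.
  - change ((inl g :: u) ++ v) with (inl g :: (u ++ v)). rewrite !Phi_cons_l.
    change (r1 (inl g :: u)) with (gmul G g (r1 u)).
    rewrite r2_app, st_mul_r, st_mul_l, IH.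
    set (A := st g (r2 u)). set (B := st g (r2 v)). set (C := st (r1 u) (r2 v)).
    set (Pu := Phi u). set (Pv := Phi v).
    transitivity (smul A (smul B (smul (smul Pu Pv) C))). gsolve.
    rewrite (Tens_comm _ _ B (smul (smul Pu Pv) C)).
    transitivity (smul (smul (smul A Pu) Pv) (smul C B)). gsolve.
    rewrite (Tens_comm _ _ C B). reflexivity.
  - change ((inr h :: u) ++ v) with (inr h :: (u ++ v)). rewrite !Phi_cons_r.
    change (r1 (inr h :: u)) with (gmul G (gone G) (r1 u)). rewrite gmul1. exact IH.
Qed.

Lemma r1_fp (x y : F) : sgeq x y -> r1 x = r1 y.
Proof. intro e. exact (hr R1_hom _ _ e). Qed.
Lemma r2_fp (x y : F) : sgeq x y -> r2 x = r2 y.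
Proof. intro e. exact (hr R2_hom _ _ e). Qed.

Lemma Phi_fp (x y : F) : sgeq x y -> TE (Phi x) (Phi y).
Proof.
  intro e. induction e.
  - reflexivity.
  - symmetry; auto.
  - etransitivity; eauto.
  - rewrite !Phi_app. rewrite (r2_app w1 v), (r2_app w2 v).
    rewrite (r1_fp _ _ e), (r2_fp _ _ e), IHe. reflexivity.
  - simpl in H0. subst. reflexivity.
  - reflexivity.
  - change (Phi [inl sone]) with (st (gone G) (gone H)). rewrite st_one_l. reflexivity.
  - reflexivity.
  - change (Phi [inl a; inl a']) with (smul (st a (gmul H (gone H) (gone H))) (st a' (gone H))).
    change (Phi [inl (smul a a')]) with (st (gmul G a a') (gone H)).
    rewrite gmul1, !st_one_r. gsolve.
  - reflexivity.
Qed.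

Lemma Phi_inv (x : F) : r1 x = gone G -> TE (Phi (sinv x)) (sinv (Phi x)).
Proof.
  intro h1.
  assert (E : TE (smul (Phi x) (Phi (sinv x))) sone).
  { transitivity (Phi (smul x (sinv x))).
    - change (smul x (sinv x)) with (x ++ sinv x). rewrite Phi_app, h1, st_one_l. gsolve.
    - change (@sone T) with (Phi (@sone F)). apply Phi_fp. apply sg_inv_r. }
  transitivity (smul (sinv (Phi x)) (smul (Phi x) (Phi (sinv x)))). gsolve.
  rewrite E. gsolve.
Qed.

End PhiSec.

Section PhiN.
Context (G H : group).
Notation F := (FP (to_s G) (to_s H)).
Notation T := (Tens (ab G) (ab H)).
Notation TE x y := (@sgeq T x y).
Notation GG := (FP (to_s G) (to_s G)).
Notation HH := (FP (to_s H) (to_s H)).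
Notation st := (st G H).
Notation Phi := (Phi G H).

Lemma st_nab_l (u : GG) R : TE (st (nabla u) R) (smul (st (r1 u) R) (st (r2 u) R)).
Proof.
  induction u as [|[g|g] u IH].
  - change (nabla []) with (gone G). change (r1 []) with (gone G). change (r2 []) with (gone G).
    rewrite !st_one_l. gsolve.
  - change (nabla (inl g :: u)) with (gmul G g (nabla u)).
    change (r1 (inl g :: u)) with (gmul G g (r1 u)).
    change (r2 (inl g :: u)) with (gmul G (gone G) (r2 u)).
    rewrite !st_mul_l, IH, st_one_l. gsolve.
  - change (nabla (inr g :: u)) with (gmul G g (nabla u)).
    change (r1 (inr g :: u)) with (gmul G (gone G) (r1 u)).
    change (r2 (inr g :: u)) with (gmul G g (r2 u)).
    rewrite !st_mul_l, IH, st_one_l.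
    transitivity (smul (smul (st g R) (st (r1 u) R)) (st (r2 u) R)). gsolve.
    rewrite (Tens_comm _ _ (st g R) (st (r1 u) R)). gsolve.
Qed.

Lemma st_nab_r g (v : HH) : TE (st g (nabla v)) (smul (st g (r1 v)) (st g (r2 v))).
Proof.
  induction v as [|[h|h] v IH].
  - change (nabla []) with (gone H). change (r1 []) with (gone H). change (r2 []) with (gone H).
    rewrite !st_one_r. gsolve.
  - change (nabla (inl h :: v)) with (gmul H h (nabla v)).
    change (r1 (inl h :: v)) with (gmul H h (r1 v)).
    change (r2 (inl h :: v)) with (gmul H (gone H) (r2 v)).
    rewrite !st_mul_r, IH, st_one_r. gsolve.
  - change (nabla (inr h :: v)) with (gmul H h (nabla v)).
    change (r1 (inr h :: v)) with (gmul H (gone H) (r1 v)).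
    change (r2 (inr h :: v)) with (gmul H h (r2 v)).
    rewrite !st_mul_r, IH, st_one_r.
    transitivity (smul (smul (st g h) (st g (r1 v))) (st g (r2 v))). gsolve.
    rewrite (Tens_comm _ _ (st g h) (st g (r1 v))). gsolve.
Qed.

Lemma r2_fpmap1 (f : GG -> to_s G) (z : FP GG (to_s H)) :
  r2 (fpmap f (fun h : to_s H => h) z) = @r2 GG (to_s H) z.
Proof. unfold r2. rewrite eval2_fpmap. reflexivity. Qed.

Lemma Phi_split1 (z : FP GG (to_s H)) :
  TE (Phi (fpmap (@nabla (to_s G)) (fun h : to_s H => h) z))
     (smul (Phi (fpmap (@r1 (to_s G) (to_s G)) (fun h : to_s H => h) z))
           (Phi (fpmap (@r2 (to_s G) (to_s G)) (fun h : to_s H => h) z))).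
Proof.
  induction z as [|[u|h] z IH].
  - change (Phi (fpmap _ _ [])) with (@sone T). gsolve.
  - change (fpmap ?f ?g (inl u :: z)) with (inl (f u) :: fpmap f g z).
    rewrite !Phi_cons_l, !r2_fpmap1, IH, st_nab_l.
    set (R := r2 z).
    set (P1 := Phi (fpmap (@r1 (to_s G) (to_s G)) (fun h : to_s H => h) z)).
    set (P2 := Phi (fpmap (@r2 (to_s G) (to_s G)) (fun h : to_s H => h) z)).
    transitivity (smul (st (r1 u) R) (smul (smul (st (r2 u) R) P1) P2)). gsolve.
    rewrite (Tens_comm _ _ (st (r2 u) R) P1). gsolve.
  - change (fpmap ?f ?g (inr h :: z)) with (inr (g h) :: fpmap f g z).
    rewrite !Phi_cons_r. exact IH.
Qed.

Lemma st_ev g (w : FP (to_s G) HH) :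
  TE (st g (eval2 (fun _ : to_s G => @sone (to_s H)) (@nabla (to_s H)) w))
     (smul (st g (eval2 (fun _ : to_s G => @sone (to_s H)) (@r1 (to_s H) (to_s H)) w))
           (st g (eval2 (fun _ : to_s G => @sone (to_s H)) (@r2 (to_s H) (to_s H)) w))).
Proof.
  induction w as [|[a|v] w IH].
  - change (TE (st g (gone H)) (smul (st g (gone H)) (st g (gone H)))). rewrite !st_one_r. gsolve.
  - change (eval2 ?f ?g (inl a :: w)) with (gmul H (f a) (eval2 f g w)).
    rewrite !st_mul_r, IH, st_one_r. gsolve.
  - change (eval2 ?f ?g (inr v :: w)) with (gmul H (g v) (eval2 f g w)).
    rewrite !st_mul_r, IH, st_nab_r.
    set (X1 := st g (eval2 (fun _ : to_s G => @sone (to_s H)) (@r1 (to_s H) (to_s H)) w)).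
    set (X2 := st g (eval2 (fun _ : to_s G => @sone (to_s H)) (@r2 (to_s H) (to_s H)) w)).
    transitivity (smul (st g (r1 v)) (smul (smul (st g (r2 v)) X1) X2)). gsolve.
    rewrite (Tens_comm _ _ (st g (r2 v)) X1). gsolve.
Qed.

Lemma Phi_split2 (z : FP (to_s G) HH) :
  TE (Phi (fpmap (fun g : to_s G => g) (@nabla (to_s H)) z))
     (smul (Phi (fpmap (fun g : to_s G => g) (@r1 (to_s H) (to_s H)) z))
           (Phi (fpmap (fun g : to_s G => g) (@r2 (to_s H) (to_s H)) z))).
Proof.
  induction z as [|[g|v] z IH].
  - change (Phi (fpmap _ _ [])) with (@sone T). gsolve.
  - change (fpmap ?f ?g' (inl g :: z)) with (inl (f g) :: fpmap f g' z).
    rewrite !Phi_cons_l. unfold r2 at 1 2 3. rewrite !eval2_fpmap, IH, st_ev.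
    set (P1 := Phi (fpmap (fun g : to_s G => g) (@r1 (to_s H) (to_s H)) z)).
    set (X2 := st g (eval2 _ (@r2 (to_s H) (to_s H)) z)).
    set (X1 := st g (eval2 _ (@r1 (to_s H) (to_s H)) z)).
    set (P2 := Phi (fpmap (fun g : to_s G => g) (@r2 (to_s H) (to_s H)) z)).
    transitivity (smul X1 (smul (smul X2 P1) P2)). gsolve.
    rewrite (Tens_comm _ _ X2 P1). gsolve.
  - change (fpmap ?f ?g (inr v :: z)) with (inr (g v) :: fpmap f g z).
    rewrite !Phi_cons_r. exact IH.
Qed.

End PhiN.

Section Inj.
Context (G H : group).
Notation F := (FP (to_s G) (to_s H)).
Notation T := (Tens (ab G) (ab H)).
Notation TE x y := (@sgeq T x y).
Notation GG := (FP (to_s G) (to_s G)).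
Notation HH := (FP (to_s H) (to_s H)).
Notation st := (st G H).
Notation Phi := (Phi G H).

Lemma Phi_one : Phi (@sone F) = @sone T. Proof. reflexivity. Qed.

Lemma N1_ok (x : F) : N1 x -> Bker x /\ TE (Phi x) sone.
Proof.
  intros [z [[hz1 hz2] [hz3 [hz4 hz5]]]]. split; [split|].
  - rewrite (r1_fp G H _ _ hz5). transitivity (nabla (r1 z)).
    + unfold r1 at 1. rewrite eval2_fpmap. symmetry. exact (eval2_post (@nabla (to_s G)) _ _ nabla_hom z).
    + rewrite (hr nabla_hom _ _ hz1). reflexivity.
  - rewrite (r2_fp G H _ _ hz5). rewrite r2_fpmap1. exact hz2.
  - rewrite (Phi_fp G H _ _ hz5), Phi_split1, (Phi_fp G H _ _ hz3), (Phi_fp G H _ _ hz4), Phi_one. gsolve.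
Qed.

Lemma N2_ok (x : F) : N2 x -> Bker x /\ TE (Phi x) sone.
Proof.
  intros [z [[hz1 hz2] [hz3 [hz4 hz5]]]]. split; [split|].
  - rewrite (r1_fp G H _ _ hz5). unfold r1 at 1. rewrite eval2_fpmap. exact hz1.
  - rewrite (r2_fp G H _ _ hz5). transitivity (nabla (r2 z)).
    + unfold r2 at 1. rewrite eval2_fpmap. symmetry. exact (eval2_post (@nabla (to_s H)) _ _ nabla_hom z).
    + rewrite (hr nabla_hom _ _ hz2). reflexivity.
  - rewrite (Phi_fp G H _ _ hz5), Phi_split2, (Phi_fp G H _ _ hz3), (Phi_fp G H _ _ hz4), Phi_one. gsolve.
Qed.

Lemma sgen_ok (x : F) : sgen (fun z => N1 z \/ N2 z) x -> Bker x /\ TE (Phi x) sone.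
Proof.
  intro h. induction h as [x [h|h]| |x y _ [Bx Px] _ [By Py]|x _ [Bx Px]|x y _ [Bx Px] e].
  - apply N1_ok; auto.
  - apply N2_ok; auto.
  - split. apply Bker_one. reflexivity.
  - split. apply Bker_mul; auto.
    change (smul x y) with (x ++ y). rewrite Phi_app, Px, Py.
    destruct Bx as [Bx1 _]. change (r1 x = gone G) in Bx1. rewrite Bx1, st_one_l. gsolve.
  - split. apply Bker_inv; auto.
    destruct Bx as [Bx1 _]. rewrite Phi_inv by exact Bx1. rewrite Px. gsolve.
  - split. eapply Bker_eq; eauto. rewrite <- (Phi_fp G H _ _ e). exact Px.
Qed.

Lemma Phi_gen1 s a b : TE (Phi (gen1 s a b)) [(s, a, b)].
Proof.
  assert (Ht : TE (Phi (gen1 true a b)) (st a b)).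
  { change (Phi (gen1 true a b)) with
      (smul (st a (gmul H b (gmul H (gone H) (gmul H (ginv H b) (gone H)))))
            (smul (st (ginv G a) (gmul H (ginv H b) (gone H))) sone)).
    replace (gmul H b (gmul H (gone H) (gmul H (ginv H b) (gone H)))) with (gone H)
      by (symmetry; change (@sgeq (to_s H) (@smul (to_s H) b (@smul (to_s H) (@sone (to_s H)) (@smul (to_s H) (@sinv (to_s H) b) (@sone (to_s H))))) (@sone (to_s H))); gsolve).
    replace (gmul H (ginv H b) (gone H)) with (ginv H b)
      by (symmetry; change (@sgeq (to_s H) (@smul (to_s H) (@sinv (to_s H) b) (@sone (to_s H))) (@sinv (to_s H) b)); gsolve).
    rewrite st_one_r, st_inv_l, st_inv_r. gsolve. }
  destruct s. exact Ht.
  change (gen1 false a b) with (sinv (gen1 true a b)).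
  rewrite Phi_inv. rewrite Ht. reflexivity.
  destruct (Bker_gen1 G H true a b) as [h _]. exact h.
Qed.

Lemma Phi_Gam (t : T) : TE (Phi (Gam t)) t.
Proof.
  induction t as [|[[s a] b] t IH]. reflexivity.
  rewrite Gam_cons. change (smul (gen1 s a b) (Gam t)) with (gen1 s a b ++ Gam t).
  rewrite Phi_app, Phi_gen1, IH.
  destruct (Bker_gen1 G H s a b) as [h _]. change (r1 (gen1 s a b) = gone G) in h.
  rewrite h, st_one_l.
  change (TE ((([(s,a,b)] ++ t) ++ [])) ((s,a,b)::t)). rewrite app_nil_r. reflexivity.
Qed.

Lemma Gam_inj (t t' : T) : T11rel G H (Gam t) (Gam t') -> TE t t'.
Proof.
  intro h. apply sgen_ok in h as [_ hP].
  change (smul (Gam t) (sinv (Gam t'))) with (Gam t ++ sinv (Gam t')) in hP.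
  rewrite Phi_app, Phi_inv, !Phi_Gam in hP.
  2: { destruct (Bker_Gam G H t') as [h _]. exact h. }
  destruct (Bker_Gam G H t) as [h _]. change (r1 (Gam t) = gone G) in h.
  rewrite h, st_one_l in hP.
  transitivity (smul (smul (smul t (sinv t')) sone) t'). gsolve. rewrite hP. gsolve.
Qed.

End Inj.

Lemma fpmap_gen1 (G H G' H' : group) (f : hom G G') (k : hom H H') s a b :
  sgeq (@fpmap (to_s G) (to_s H) (to_s G') (to_s H') f k (gen1 s a b)) (gen1 s (f a) (k b)).
Proof.
  assert (hF : ishom (@fpmap (to_s G) (to_s H) (to_s G') (to_s H') f k)).
  { apply fpmap_hom; apply ghom_ishom. }
  destruct s; unfold gen1, scomm; rewrite ?(hi hF), !(hm hF), !(hi hF); reflexivity.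
Qed.

Lemma fpmap_Gam (G H G' H' : group) (f : hom G G') (k : hom H H') (t : Tens (ab G) (ab H)) :
  sgeq (@fpmap (to_s G) (to_s H) (to_s G') (to_s H') f k (Gam t)) (Gam (tmap f k t)).
Proof.
  assert (hF : ishom (@fpmap (to_s G) (to_s H) (to_s G') (to_s H') f k)).
  { apply fpmap_hom; apply ghom_ishom. }
  induction t as [|[[s a] b] t IH]. reflexivity.
  rewrite Gam_cons. rewrite (hm hF), fpmap_gen1, IH. reflexivity.
Qed.

Theorem proposition2p3 :
  exists Gamma : forall G H : group,
      Tens (ab G) (ab H) -> FP (to_s G) (to_s H),
    (forall G H : group,
       (forall t t' : Tens (ab G) (ab H),
          sgeq t t' -> T11rel G H (Gamma G H t) (Gamma G H t')) /\
       (forall t, Bker (Gamma G H t)) /\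
       (forall t t' : Tens (ab G) (ab H),
          T11rel G H (Gamma G H (smul t t')) (smul (Gamma G H t) (Gamma G H t'))) /\
       (forall t t' : Tens (ab G) (ab H),
          T11rel G H (Gamma G H t) (Gamma G H t') -> sgeq t t') /\
       (forall x : FP (to_s G) (to_s H),
          Bker x -> exists t, T11rel G H (Gamma G H t) x) /\
       (forall (g : G) (h : H),
          T11rel G H (Gamma G H (@stens (ab G) (ab H) g h))
                 (scomm (@i1 (to_s G) (to_s H) g) (@i2 (to_s G) (to_s H) h)))) /\
    (forall (G H G' H' : group) (f : hom G G') (k : hom H H')
            (t : Tens (ab G) (ab H)),
       T11rel G' H' (Gamma G' H' (tmap f k t))
              (@fpmap (to_s G) (to_s H) (to_s G') (to_s H') f k (Gamma G H t))).
Proof.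
  exists (fun G H t => @Gam G H t). split.
  - intros G H. split; [|split; [|split; [|split; [|split]]]].
    + intros t t' e. exact (W G H t t' e).
    + intro t. apply Bker_Gam.
    + intros t t'. apply T11_of_fp. change (smul t t') with (t ++ t'). rewrite Gam_app. reflexivity.
    + intros t t'. apply Gam_inj.
    + intros x hx. destruct (normal_form G H x) as [t ht]. exists t.
      apply T11_of_fp. destruct hx as [h1 h2].
      rewrite ht. change (r1 x = gone G) in h1. change (r2 x = gone H) in h2.
      rewrite h1, h2. change (gone G) with (@sone (to_s G)). change (gone H) with (@sone (to_s H)).
      rewrite (ho I1_hom), (ho I2_hom). gsolve.
    + intros g h. apply T11_of_fp. unfold stens. rewrite Gam_cons.
      change (@Gam G H []) with (@sone (FP (to_s G) (to_s H))). rewrite sg_one_r. reflexivity.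
  - intros G H G' H' f k t. apply T11_of_fp. symmetry. apply fpmap_Gam.
Qed.
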